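(* Let $M\geq 1$ and let $r$ be a DSIC mechanism in the bilateral cooperation model described in the context, with competitive ratio $\alpha$. For $d\in\{1,\dots,M\}$ let $B^d$ be the set of vectors $b\in\mathbb{R}^M$ with $b_i=1$ for $i\in\{1,\dots,d\}$ and $b_i\leq 0$ for $i\in\{d+1,\dots,M\}$. For $\varepsilon\in(0,1)$ let $s^\varepsilon\in\mathbb{R}^M$ be given by $s^\varepsilon_i=\varepsilon^{M-i}$. Then for every $d\in\{1,\dots,M\}$, every $b\in B^d$ and every $\varepsilon\in(0,1)$: $$\sum_{i=1}^d r_i(b,s^\varepsilon)\ \geq\ d\cdot(\alpha-2\varepsilon).$$
   Context: Bilateral cooperation model: there are two agents, a buyer and a seller, and options $0,1,\dots,M$. A buyer utility vector is $b=(b_1,\dots,b_M)\in\mathbb{R}^M$ and a seller utility vector is $s=(s_1,\dots,s_M)\in\mathbb{R}^M$ (entries may be positive, zero or negative); by convention $b_0=s_0=0$. Define $\mathrm{Feasible}(b,s)=\{i\in\{0,\dots,M\}: b_i\geq 0 \text{ and } s_i\geq 0\}$ and $OPT(b,s)=\max_{i\in \mathrm{Feasible}(b,s)}(b_i+s_i)$. A mechanism is a function $r$ mapping each pair of reported vectors $(b',s')$ to a probability vector $(r_0(b',s'),\dots,r_M(b',s'))$. The mechanism $r$ is DSIC if for all $b,b',s,s'\in\mathbb{R}^M$: $\sum_{i=1}^M r_i(b,s')\,b_i\geq \sum_{i=1}^M r_i(b',s')\,b_i$ and $\sum_{i=1}^M r_i(b',s)\,s_i\geq \sum_{i=1}^M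 r_i(b',s')\,s_i$. The gain at true vectors $(b,s)$ is $G_r(b,s)=\sum_{i=1}^M r_i(b,s)(b_i+s_i)$, and the competitive ratio is $C_r=\min_{b,s} G_r(b,s)/OPT(b,s)$; ''competitive ratio $\alpha$'' means $C_r=\alpha$. *)

(* Defs.v *)
From HB Require Import structures.
From mathcomp Require Import all_boot all_order all_algebra.
From mathcomp Require Import reals.
Set Implicit Arguments. Unset Strict Implicit. Unset Printing Implicit Defensive.
Import Order.TTheory GRing.Theory Num.Theory.
Local Open Scope ring_scope.

Section Bilateral.
Variables (R : realType) (M : nat).

(* A utility vector (b_1,...,b_M); entry b_i is stored at ordinal i-1. *)
Definition uvec := 'I_M -> R.

(* Options 0..M are the ordinals of 'I_M.+1; ext b i = b_i with b_0 = 0. *)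
Definition ext (b : uvec) (i : 'I_M.+1) : R :=
  match unlift ord0 i with None => 0 | Some j => b j end.

Definition mechanism := uvec -> uvec -> 'I_M.+1 -> R.

Definition is_prob_vec (p : 'I_M.+1 -> R) : Prop :=
  (forall i, 0 <= p i) /\ \sum_(i < M.+1) p i = 1.

Definition is_mechanism (r : mechanism) : Prop :=
  forall b s, is_prob_vec (r b s).

(* sum_{i=1}^M p_i v_i  (the i = 0 term is 0 since v_0 = 0) *)
Definition expected (p : 'I_M.+1 -> R) (v : uvec) : R :=
  \sum_(i < M.+1) p i * ext v i.

Definition DSIC (r : mechanism) : Prop :=
  forall b b' s s' : uvec,
    expected (r b' s') b <= expected (r b s') b /\
    expected (r b' s') s <= expected (r b' s) s.

Definition gain (r : mechanism) (b s : uvec) : R :=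
  \sum_(i < M.+1) r b s i * (ext b i + ext s i).

Definition feasible (b s : uvec) (i : 'I_M.+1) : bool :=
  (0 <= ext b i) && (0 <= ext s i).

(* max over feasible options of b_i + s_i; option 0 is always feasible with
   value 0 and all feasible values are >= 0, so 0 is a correct neutral. *)
Definition OPT (b s : uvec) : R :=
  \big[Num.max/0]_(i < M.+1 | feasible b s i) (ext b i + ext s i).

(* C_r = alpha: alpha is the infimum of G_r(b,s)/OPT(b,s) over all (b,s)
   for which the ratio is defined (OPT(b,s) > 0). *)
Definition competitive_ratio (r : mechanism) (alpha : R) : Prop :=
  (forall b s, 0 < OPT b s -> alpha <= gain r b s / OPT b s) /\
  (forall e, 0 < e -> exists b s, 0 < OPT b s /\ gain r b s / OPT b s < alpha + e).

(* s^eps_i = eps^(M-i); ordinal j stands for i = j+1. *)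
Definition s_eps (eps : R) : uvec := fun j => eps ^+ (M - j.+1).

Definition in_Bd (d : nat) (b : uvec) : Prop :=
  (forall j : 'I_M, (j.+1 <= d)%N -> b j = 1) /\
  (forall j : 'I_M, (d < j.+1)%N -> b j <= 0).

End Bilateral.

(* Main.v *)
Require Import Defs.
From HB Require Import structures.
From mathcomp Require Import all_boot all_order all_algebra.
From mathcomp Require Import reals.
From mathcomp Require Import lra zify.
Import Order.TTheory GRing.Theory Num.Theory.
Local Open Scope ring_scope.

Lemma extL (R : realType) (M : nat) (v : uvec R M) (k : 'I_M) :
  ext v (lift ord0 k) = v k.
Proof. by rewrite /ext liftK. Qed.

Lemma ext0 (R : realType) (M : nat) (v : uvec R M) : ext v ord0 = 0.
Proof. by rewrite /ext unlift_none. Qed.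

Lemma expectedE (R : realType) (M : nat) (p : 'I_M.+1 -> R) (v : uvec R M) :
  expected p v = \sum_(k < M) p (lift ord0 k) * v k.
Proof.
rewrite /expected big_ord_recl ext0 mulr0 add0r; apply: eq_bigr => k _.
by rewrite extL.
Qed.

Lemma gainE (R : realType) (M : nat) (r : mechanism R M) (b s : uvec R M) :
  gain r b s = \sum_(k < M) r b s (lift ord0 k) * (b k + s k).
Proof.
rewrite /gain big_ord_recl !ext0 addr0 mulr0 add0r; apply: eq_bigr => k _.
by rewrite !extL.
Qed.

Lemma bmax_ge (R : realType) (I : eqType) (rs : seq I) (P : pred I)
  (F : I -> R) x0 j :
  j \in rs -> P j -> F j <= \big[Num.max/x0]_(i <- rs | P i) F i.
Proof.
elim: rs => // a rs IH; rewrite inE big_cons; case/orP => [/eqP-> Pj | jr Pj].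
  by rewrite Pj le_max lexx.
case: ifP => _; last exact: IH.
by rewrite le_max IH ?orbT.
Qed.

Lemma OPT_ge (R : realType) (M : nat) (b s : uvec R M) (k : 'I_M) :
  0 <= b k -> 0 <= s k -> b k + s k <= OPT b s.
Proof.
move=> hb hs; rewrite /OPT.
have := @bmax_ge R _ (index_enum 'I_M.+1) (feasible b s)
  (fun i => ext b i + ext s i) 0 (lift ord0 k).
rewrite !extL; apply; first by rewrite mem_index_enum.
by rewrite /feasible !extL hb hs.
Qed.

Lemma OPT_le (R : realType) (M : nat) (b s : uvec R M) (c : R) :
  0 <= c -> (forall k, 0 <= b k -> 0 <= s k -> b k + s k <= c) ->
  OPT b s <= c.
Proof.
move=> c0 H; rewrite /OPT; apply: (big_ind (fun x => x <= c)) => //.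
  by move=> x y hx hy; rewrite ge_max hx hy.
move=> i; rewrite /feasible /ext.
case: (unliftP ord0 i) => [j _|_]; last by rewrite addr0.
by case/andP; apply: H.
Qed.

Lemma CR1 (R : realType) (M : nat) (r : mechanism R M) alpha (b s : uvec R M) :
  competitive_ratio r alpha -> 0 < OPT b s -> alpha * OPT b s <= gain r b s.
Proof. by move=> [H _] h; rewrite -ler_pdivlMr //; apply: H. Qed.

Lemma rr_ge0 (R : realType) (M : nat) (r : mechanism R M) b s i :
  is_mechanism r -> 0 <= r b s i.
Proof. by move=> H; case: (H b s). Qed.

Lemma sum_le1 (R : realType) (M : nat) (r : mechanism R M) b s :
  is_mechanism r -> \sum_(k < M) r b s (lift ord0 k) <= 1.
Proof.
move=> H; case: (H b s) => h0; rewrite big_ord_recl => h1.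
have := h0 ord0; lra.
Qed.

Lemma rr_le1 (R : realType) (M : nat) (r : mechanism R M) b s (k : 'I_M) :
  is_mechanism r -> r b s (lift ord0 k) <= 1.
Proof.
move=> H; have := sum_le1 R M r b s H; rewrite (bigD1 k) //=.
have : 0 <= \sum_(i < M | i != k) r b s (lift ord0 i).
  by apply: sumr_ge0 => i _; exact: (rr_ge0 R M r).
lra.
Qed.

Lemma sum_if (R : realType) (M : nat) (F : 'I_M -> R) k0 :
  \sum_(k < M) (if k == k0 then F k else 0) = F k0.
Proof. by rewrite -big_mkcond big_pred1_eq. Qed.

Lemma step (R : realType) (M : nat) (r : mechanism R M) (alpha eps K : R)
  (k0 : 'I_M) (c : uvec R M) :
  is_mechanism r -> DSIC r -> competitive_ratio r alpha -> 0 < alpha ->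
  0 < eps < 1 -> 1 <= K ->
  4 <= (K + 1) * eps * eps ^+ (M - k0.+1) ->
  (forall k : 'I_M, (k < k0)%N -> c k = 1) -> c k0 = 0 ->
  (forall k : 'I_M, (k0 < k)%N -> c k <= - K) ->
  alpha - eps - eps / 2 <= r c (s_eps eps) (lift ord0 k0).
Proof.
move=> Hm Hd Hc a0 /andP[e0 e1] K1 HK c1 c0 c2.
set s := s_eps eps.
set s0 := s k0.
have sE : forall k, s k = eps ^+ (M - k.+1) by [].
have s_gt0 : forall k, 0 < s k by move=> k; rewrite sE exprn_gt0.
have s_le1 : forall k, s k <= 1 by move=> k; rewrite sE exprn_ile1 // ltW.
have s_lt : forall k : 'I_M, (k < k0)%N -> s k <= eps * s0.
  move=> k hk; rewrite /s0 !sE -exprS; apply: (ler_wiXn2l (ltW e0) (ltW e1)).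
  have := ltn_ord k0; lia.
have c_le1 : forall k, c k <= 1.
  move=> k; case: (ltngtP k k0) => h; [by rewrite c1 | have := c2 _ h; lra | ].
  by rewrite (_ : k = k0) ?c0 //; apply: val_inj.
set t : uvec R M := fun k => if k == k0 then s0 else -K.
have OPTt : OPT c t = s0.
  apply/eqP; rewrite eq_le; apply/andP; split.
    apply: OPT_le; first exact: ltW (s_gt0 k0).
    move=> k _; rewrite /t; case: eqP => [->|_]; first by rewrite c0 add0r.
    lra.
  have := OPT_ge R M c t k0; rewrite c0 /t eqxx add0r; apply => //; exact: ltW (s_gt0 k0).
have Hrt : alpha <= r c t (lift ord0 k0).
  have := CR1 R M r alpha c t Hc; rewrite OPTt => /(_ (s_gt0 k0)).
  rewrite gainE.
  have : \sum_(k < M) r c t (lift ord0 k) * (c k + t k) <=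
         \sum_(k<M) (if k == k0 then r c t (lift ord0 k) * s0 else 0).
    apply: ler_sum => k _; rewrite /t; case: eqP => [->|_]; first by rewrite c0 add0r.
    have := rr_ge0 R M r c t (lift ord0 k) Hm; have := c_le1 k; nra.
  rewrite sum_if => h1 h2.
  have := s_gt0 k0; rewrite -/s0 => h3. nra.
have HE : alpha * s0 <= expected (r c s) s.
  have := (Hd c c s t).2; rewrite !expectedE => h; apply: le_trans h.
  have : \sum_(k<M) (if k == k0 then r c t (lift ord0 k) * s k else 0) <=
         \sum_(k < M) r c t (lift ord0 k) * s k.
    apply: ler_sum => k _; case: eqP => // _; apply: mulr_ge0; [exact: rr_ge0 | exact: ltW].
  rewrite sum_if => h; apply: le_trans h; rewrite ler_pM2r //; exact: s_gt0.
have Hg : 0 <= gain r c s.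
  have hO : s0 <= OPT c s.
    have := OPT_ge R M c s k0; rewrite c0 add0r; apply => //; exact: ltW (s_gt0 k0).
  have := CR1 R M r alpha c s Hc; have := s_gt0 k0; rewrite -/s0 => h; nra.
have key : \sum_(k<M) (K+1) * (r c s (lift ord0 k) * s k) <=
   \sum_(k<M) ((K+1) * eps * s0 * r c s (lift ord0 k) +
     (if k == k0 then (K+1) * s0 * r c s (lift ord0 k) else 0) +
     (2 * r c s (lift ord0 k) - r c s (lift ord0 k) * (c k + s k))).
  apply: ler_sum => k _.
  have r0 : 0 <= r c s (lift ord0 k) by exact: rr_ge0.
  have := s_gt0 k; have := s_le1 k; have := s_gt0 k0; rewrite -/s0 => h1 h2 h3.
  case: (ltngtP k k0) => h.
  - have := s_lt k h; rewrite (c1 _ h).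
    have -> : (k == k0) = false by apply/negbTE; rewrite neq_ltn h.
    move=> h4.
    have hh : (K+1) * r c s (lift ord0 k) * s k <= (K+1) * r c s (lift ord0 k) * (eps * s0).
      by rewrite ler_wpM2l //; apply: mulr_ge0 => //; lra.
    nra.
  - have := c2 k h.
    have -> : (k == k0) = false by apply/negbTE; rewrite neq_ltn h orbT.
    move=> h4.
    have ha : 0 <= (K+1) * eps * s0 * r c s (lift ord0 k).
      by apply: mulr_ge0 => //; apply: mulr_ge0; [apply: mulr_ge0|]; lra.
    have hb : r c s (lift ord0 k) * c k <= r c s (lift ord0 k) * (- K) by rewrite ler_wpM2l.
    have hc : (K+1) * r c s (lift ord0 k) * s k <= (K+1) * r c s (lift ord0 k) * 1.
      by rewrite ler_wpM2l //; apply: mulr_ge0 => //; lra.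
    have hd : r c s (lift ord0 k) * s k <= r c s (lift ord0 k) * 1 by rewrite ler_wpM2l.
    rewrite /=; lra.
  - have e : k = k0 by apply: val_inj.
    subst k; rewrite eqxx c0 add0r.
    have ha : 0 <= (K+1) * eps * s0 * r c s (lift ord0 k0).
      by apply: mulr_ge0 => //; apply: mulr_ge0; [apply: mulr_ge0|]; lra.
    have hd : r c s (lift ord0 k0) * s0 <= r c s (lift ord0 k0) * 1 by rewrite ler_wpM2l.
    rewrite -/s0; lra.
rewrite -mulr_sumr !big_split /= sum_if sumrN -!mulr_sumr -expectedE -gainE in key.
have hsum := sum_le1 R M r c s Hm.
have hsum0 : 0 <= \sum_(k<M) r c s (lift ord0 k).
  by apply: sumr_ge0 => k _; exact: rr_ge0.
have hs0 := s_gt0 k0; rewrite -/s0 in hs0.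
set E := expected _ _ in HE key.
set Sg := \sum_(k<M) _ in key hsum hsum0.
set g := gain _ _ _ in Hg key.
set x := r c s (lift ord0 k0) in key *.
have hX : 0 < (K + 1) * s0 by apply: mulr_gt0 => //; lra.
have h5 : (K + 1) * eps * s0 * Sg <= (K + 1) * eps * s0.
  rewrite -[X in _ <= X]mulr1 ler_wpM2l //; apply: mulr_ge0; [apply: mulr_ge0|]; lra.
have h6 : (K + 1) * (alpha * s0) <= (K + 1) * E by rewrite ler_wpM2l //; lra.
have HK' : 4 <= (K + 1) * eps * s0 by exact: HK.
have h7 : ((K + 1) * s0) * (alpha - eps - eps / 2 - x) <= 0 by lra.
have := h7; rewrite pmulr_rle0 //; lra.
Qed.

Lemma mono (R : realType) (M : nat) (r : mechanism R M) (s c c' : uvec R M)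
  (k0 : 'I_M) :
  is_mechanism r -> DSIC r -> (forall k, c k <= c' k) ->
  expected (r c s) c + r c s (lift ord0 k0) * (c' k0 - c k0) <=
  expected (r c' s) c'.
Proof.
move=> Hm Hd Hc; apply: le_trans (Hd c' c s s).1.
rewrite !expectedE.
have : \sum_(k < M) (r c s (lift ord0 k) * c k +
   (if k == k0 then r c s (lift ord0 k) * (c' k - c k) else 0)) <=
   \sum_(k < M) r c s (lift ord0 k) * c' k.
  apply: ler_sum => k _; case: eqP => [->|_].
    by rewrite mulrBr addrC subrK.
  by rewrite addr0 ler_wpM2l //; exact: rr_ge0.
by rewrite big_split /= sum_if.
Qed.

Lemma mono0 (R : realType) (M : nat) (r : mechanism R M) (s c c' : uvec R M)
  (v : uvec R M) :
  is_mechanism r -> (forall k, c k <= c' k) ->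
  expected (r v s) c <= expected (r v s) c'.
Proof.
move=> Hm Hc; rewrite !expectedE; apply: ler_sum => k _.
by rewrite ler_wpM2l //; exact: rr_ge0.
Qed.

Definition Pv (R : realType) (M : nat) (b : uvec R M) (d j : nat) (K x : R) :
  uvec R M := fun k => if (k < j)%N then 1 else if (k == j :> nat) then x
    else if (k < d)%N then - K else b k - K.

Theorem lemma2 (R : realType) (M : nat) (r : mechanism R M) (alpha : R) :
  (1 <= M)%N ->
  is_mechanism r -> DSIC r -> competitive_ratio r alpha ->
  forall (d : nat), (1 <= d <= M)%N ->
  forall b : uvec R M, in_Bd d b ->
  forall eps : R, 0 < eps < 1 ->
  d%:R * (alpha - 2 * eps) <= \sum_(i < M.+1 | (0 < i <= d)%N) r b (@s_eps R M eps) i.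
Proof.
move=> M1 Hm Hd Hc d /andP[d1 dM] b [b1 b2] eps /andP[e0 e1].
set s := s_eps eps.
have SE : \sum_(i < M.+1 | (0 < i <= d)%N) r b s i =
    \sum_(k < M) (if (k < d)%N then r b s (lift ord0 k) else 0).
  rewrite big_mkcond big_ord_recl /= add0r; apply: eq_bigr => k _.
  by rewrite /bump add1n.
rewrite SE.
have Sge0 : 0 <= \sum_(k < M) (if (k < d)%N then r b s (lift ord0 k) else 0).
  by apply: sumr_ge0 => k _; case: ifP => // _; exact: rr_ge0.
have dge1 : 1 <= d%:R :> R by rewrite ler1n.
case: (leP alpha 0) => a0.
  have : d%:R * (alpha - 2 * eps) <= 0.
    by rewrite mulr_ge0_le0 ?ler0n //; lra.
  lra.
have s_gt0 : forall k, 0 < s k by move=> k; rewrite /s /s_eps exprn_gt0.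
have s_le1 : forall k, s k <= 1 by move=> k; rewrite /s /s_eps exprn_ile1 // ltW.
set K := 4 / eps ^+ M.+1.
have eM : 0 < eps ^+ M.+1 by rewrite exprn_gt0.
have eM1 : eps ^+ M.+1 <= 1 by rewrite exprn_ile1 // ltW.
have hKe : K * eps ^+ M.+1 = 4 by rewrite /K divfK // lt0r_neq0.
have K1 : 1 <= K by nra.
have HK : forall k0 : 'I_M, 4 <= (K + 1) * eps * eps ^+ (M - k0.+1).
  move=> k0.
  have h1 : eps ^+ M <= eps ^+ (M - k0.+1).
    apply: (ler_wiXn2l (ltW e0) (ltW e1)); lia.
  have h2 : K * eps * eps ^+ M <= K * eps * eps ^+ (M - k0.+1).
    by rewrite ler_wpM2l //; apply: mulr_ge0; lra.
  have h3 : 0 <= eps * eps ^+ (M - k0.+1) by apply: mulr_ge0; [lra | apply: exprn_ge0; lra].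
  move: hKe; rewrite exprS mulrA => hKe; lra.
pose P := fun (j : nat) (x : R) => Pv R M b d j K x.
pose V := fun c => expected (r c s) c.
have bneg : forall k : 'I_M, (d <= k)%N -> b k <= 0 by move=> k hk; apply: b2.
have P0a : forall j x (k : 'I_M), (k < j)%N -> P j x k = 1.
  by move=> j x k h; rewrite /P /Pv h.
have Pjj : forall j x (hjM : (j < M)%N), P j x (Ordinal hjM) = x.
  by move=> j x hjM; rewrite /P /Pv /= ltnn eqxx.
have Pgt : forall j x (k : 'I_M), (j < k)%N -> P j x k <= - K.
  move=> j x k h; rewrite /P /Pv.
  have -> : (k < j)%N = false by apply/negbTE; rewrite -leqNgt ltnW.
  have -> : (k == j :> nat) = false by apply/negbTE; rewrite neq_ltn h orbT.
  case: ifP => hk; first lra.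
  have := bneg k; rewrite leqNgt hk => /(_ isT); lra.
have hstep : forall j, (j < d)%N -> V (P j 0) + (alpha - eps - eps / 2) <= V (P j 1).
  move=> j hj.
  have hjM : (j < M)%N by apply: leq_trans hj dM.
  have Hle : forall k, P j 0 k <= P j 1 k.
    by move=> k; rewrite /P /Pv; case: ifP => _; [lra|case: ifP => _; lra].
  have := mono R M r s (P j 0) (P j 1) (Ordinal hjM) Hm Hd Hle.
  rewrite !Pjj subr0 mulr1.
  have st := step R M r alpha eps K (Ordinal hjM) (P j 0) Hm Hd Hc a0.
  rewrite e0 e1 /= in st.
  have := st isT K1 (HK (Ordinal hjM)) (P0a j 0) (Pjj j 0 hjM) (Pgt j 0).
  rewrite /V; lra.
have hlink : forall j, (j.+1 < d)%N -> V (P j 1) <= V (P j.+1 0).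
  move=> j hj.
  have hjM : (j < M)%N by apply: leq_trans (ltnW hj) dM.
  have Hle : forall k, P j 1 k <= P j.+1 0 k.
    move=> k; rewrite /P /Pv; case: (ltngtP k j) => h.
    - by rewrite ltnS ltnW.
    - have -> : (k < j.+1)%N = false by apply/negbTE; rewrite -leqNgt.
      case: eqP => e; last by [].
      case: ifP => hk; first lra.
      have := bneg k; rewrite leqNgt hk => /(_ isT); lra.
    - by rewrite h ltnSn.
  have := mono R M r s (P j 1) (P j.+1 0) (Ordinal hjM) Hm Hd Hle.
  have : 0 <= r (P j 1) s (lift ord0 (Ordinal hjM)) *
     (P j.+1 0 (Ordinal hjM) - P j 1 (Ordinal hjM)).
    by apply: mulr_ge0; [exact: rr_ge0 | rewrite subr_ge0].
  rewrite /V; lra.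
have hind : forall j, (j < d)%N ->
    V (P 0%N 0) + j.+1%:R * (alpha - eps - eps / 2) <= V (P j 1).
  elim => [|j IH] hj.
    by have := hstep 0%N hj; rewrite mul1r.
  have := IH (ltnW hj); have := hlink j hj; have := hstep j.+1 hj.
  rewrite -[j.+2]addn1 natrD mulrDl mul1r; lra.
have hstart : - (eps / 2) <= V (P 0%N 0).
  pose k0 : 'I_M := Ordinal M1.
  pose N := 2 / eps.
  have hN : N * eps = 2 by rewrite /N divfK // lt0r_neq0.
  have N1 : 1 <= N by nra.
  have hP0 : forall k, P 0%N 0 k <= 0.
    move=> k; rewrite /P /Pv ltn0; case: ifP => _; first lra.
    case: ifP => hk; first lra.
    have := bneg k; rewrite leqNgt hk => /(_ isT); lra.
  have hPk0 : P 0%N 0 k0 = 0 by exact: Pjj.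
  pose Z : uvec R M := fun k => if k == k0 then 0 else N * P 0%N 0 k - 1.
  have HZ : forall k, Z k <= P 0%N 0 k.
    move=> k; rewrite /Z; case: eqP => [->|_]; first by rewrite hPk0.
    have := hP0 k; nra.
  have h1 := (Hd (P 0%N 0) Z s s).1.
  have hg : 0 <= gain r Z s.
    have hO : s k0 <= OPT Z s.
      have := OPT_ge R M Z s k0; rewrite /Z eqxx add0r; apply => //; exact: ltW.
    have := CR1 R M r alpha Z s Hc; have := s_gt0 k0; nra.
  have key : \sum_(k < M) (r Z s (lift ord0 k) * (Z k + s k) -
      (if k == k0 then r Z s (lift ord0 k) * s k else 0)) <=
      \sum_(k < M) N * (r Z s (lift ord0 k) * P 0%N 0 k).
    apply: ler_sum => k _; case: eqP => [->|ne].
      by rewrite /Z eqxx hPk0 add0r subrr !mulr0.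
    have -> : Z k = N * P 0%N 0 k - 1 by rewrite /Z; case: eqP.
    have r0 : 0 <= r Z s (lift ord0 k) by exact: rr_ge0.
    have : r Z s (lift ord0 k) * s k <= r Z s (lift ord0 k) * 1 by rewrite ler_wpM2l.
    lra.
  rewrite big_split /= sumrN sum_if -mulr_sumr -gainE -expectedE in key.
  have hr1 := rr_le1 R M r Z s k0 Hm.
  have hr0 : 0 <= r Z s (lift ord0 k0) by exact: rr_ge0.
  have := s_le1 k0; have := s_gt0 k0 => hs1 hs2.
  have hrs : r Z s (lift ord0 k0) * s k0 <= 1 by nra.
  set E := expected (r Z s) (P 0%N 0) in key h1.
  have h2 : 0 <= (N * E + 1) * eps by apply: mulr_ge0; lra.
  have eq : N * E * eps = 2 * E by rewrite mulrAC hN mulrC.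
  rewrite mulrDl mul1r eq in h2.
  rewrite /V; lra.
have hdd : (d.-1 < d)%N by rewrite ltn_predL.
have hfin := hind d.-1 hdd; rewrite prednK // in hfin.
have Hpt : forall k, P d.-1 1 k <= b k.
  move=> k; rewrite /P /Pv; case: ifP => h1.
    by rewrite b1 //; lia.
  case: ifP => h2.
    by rewrite b1 //; move/eqP: h2; lia.
  case: ifP => h3; first by exfalso; move/eqP: h2; lia.
  lra.
have hB1 := mono0 R M r s (P d.-1 1) b (P d.-1 1) Hm Hpt.
have hB2 := (Hd b (P d.-1 1) s s).1.
have hB3 : expected (r b s) b <=
    \sum_(k < M) (if (k < d)%N then r b s (lift ord0 k) else 0).
  rewrite expectedE; apply: ler_sum => k _; case: ifP => h.
    by rewrite b1 // mulr1.
  rewrite mulr_ge0_le0 //; first exact: rr_ge0.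
  by apply: bneg; rewrite leqNgt h.
have : 1 * eps <= d%:R * eps by rewrite ler_wpM2r //; lra.
rewrite /V in hfin hstart; lra.
Qed.
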